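(* Let $\varPhi\subset\mathbb{E}^3$ be a skew ruled surface in standard parametrization with invariants $\delta,\kappa,\lambda$, equipped with a right normalization with support function $q=\frac{f(u)+g(u)v}{w}$, neither $f$ nor $g$ the zero function. Then the scalar curvature $S$ of the relative metric vanishes identically if and only if $\varPhi$ is conoidal and $$f=\frac12|\delta|^{1/2}\,g\left(\int|\delta|^{1/2}\lambda\,\mathrm{d}u+c\right),\quad c\in\mathbb{R}.$$
   Context: $\varPhi$ is a ruled $C^r$-surface ($r\ge3$) in $\mathbb{E}^3$ with nonvanishing Gaussian curvature, in standard parameters $\overline{x}(u,v)=\overline{s}(u)+v\,\overline{e}(u)$, $(u,v)\in I\times\mathbb{R}$, $|\overline{e}|=|\overline{e}'|=1$, $\langle\overline{s}',\overline{e}'\rangle=0$. Frame $\overline{n}=\overline{e}'$, $\overline{z}=\overline{e}\times\overline{n}$. Invariants: $\delta=(\overline{s}',\overline{e},\overline{e}')\neq0$, $\kappa=(\overline{e},\overline{e}',\overline{e}'')$, $\lambda=\cot\sphericalangle(\overline{e},\overline{s}')$, so $\overline{s}'=\delta\lambda\overline{e}+\delta\overline{z}$. $w=\sqrt{\delta^2+v^2}$, unit normal $\overline{\xi}=(\delta\overline{n}-v\overline{z})/w$. Second fundamental form: $h_{11}=-(\kappa w^2+\delta'v-\delta^2\lambda)/w$, $h_{12}=\delta/w$, $h_{22}=0$. Conoidal means $\kappa\equiv0$. A relative normalization $\overline{y}$ is determined by its support function $q=\langle\overline{\xi},\overline{y}\rangle\neq0$; a right normalization has $q=(f+gv)/w$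 with $f,g$ functions of $u$ only ($C^{s+1}$), i.e. $\overline{y}=\frac{(\kappa f-\delta g')v+\delta' f-\delta f'-\delta^2\kappa g}{\delta^2}\overline{e}+\frac{f}{\delta}\overline{n}-g\overline{z}$. The relative metric is the (indefinite) metric $G_{ij}=q^{-1}h_{ij}$, and $S$ is its Gaussian (scalar) curvature. $\int\cdots\mathrm{d}u$ denotes an antiderivative. *)

(* Defs.v *)
From Stdlib Require Import Reals.
From Coquelicot Require Import Coquelicot.
Open Scope R_scope.

Definition V3 : Type := (R * R * R)%type.
Definition vx (a : V3) : R := fst (fst a).
Definition vy (a : V3) : R := snd (fst a).
Definition vz (a : V3) : R := snd a.
Definition mk3 (x y z : R) : V3 := (x, y, z).

Definition vadd (a b : V3) : V3 := mk3 (vx a + vx b) (vy a + vy b) (vz a + vz b).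
Definition vscal (k : R) (a : V3) : V3 := mk3 (k * vx a) (k * vy a) (k * vz a).
Definition dot (a b : V3) : R := vx a * vx b + vy a * vy b + vz a * vz b.
Definition cross (a b : V3) : V3 :=
  mk3 (vy a * vz b - vz a * vy b)
      (vz a * vx b - vx a * vz b)
      (vx a * vy b - vy a * vx b).
Definition vnorm (a : V3) : R := sqrt (dot a a).
Definition triple (a b c : V3) : R := dot a (cross b c).

(** cotangent of the (unoriented) angle between two non-parallel vectors:
    cos / sin = <a,b>/(|a||b|) / (|a x b|/(|a||b|)) *)
Definition cot_angle (a b : V3) : R := dot a b / vnorm (cross a b).

Definition Dv (c : R -> V3) (u : R) : V3 :=
  mk3 (Derive (fun t => vx (c t)) u)
      (Derive (fun t => vy (c t)) u)
      (Derive (fun t => vz (c t)) u).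

Definition pu3 (X : R -> R -> V3) (u v : R) : V3 := Dv (fun t => X t v) u.
Definition pv3 (X : R -> R -> V3) (u v : R) : V3 := Dv (fun t => X u t) v.
Definition pu (F : R -> R -> R) (u v : R) : R := Derive (fun t => F t v) u.
Definition pv (F : R -> R -> R) (u v : R) : R := Derive (fun t => F u t) v.

Definition inI (a b : Rbar) (u : R) : Prop := Rbar_lt a u /\ Rbar_lt u b.

Definition CkI (k : nat) (a b : Rbar) (f : R -> R) : Prop :=
  forall u, inI a b u ->
    (forall j, (j <= k)%nat -> ex_derive_n f j u) /\ continuous (Derive_n f k) u.

Definition CkI3 (k : nat) (a b : Rbar) (c : R -> V3) : Prop :=
  CkI k a b (fun t => vx (c t)) /\ CkI k a b (fun t => vy (c t)) /\
  CkI k a b (fun t => vz (c t)).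

Definition ruled (s e : R -> V3) (u v : R) : V3 := vadd (s u) (vscal v (e u)).

Definition standard_params (a b : Rbar) (s e : R -> V3) : Prop :=
  forall u, inI a b u ->
    vnorm (e u) = 1 /\ vnorm (Dv e u) = 1 /\ dot (Dv s u) (Dv e u) = 0.

Definition delta (s e : R -> V3) (u : R) : R := triple (Dv s u) (e u) (Dv e u).
Definition kappa (e : R -> V3) (u : R) : R := triple (e u) (Dv e u) (Dv (Dv e) u).
Definition lambda (s e : R -> V3) (u : R) : R := cot_angle (e u) (Dv s u).

Definition wfun (s e : R -> V3) (u v : R) : R := sqrt (delta s e u ^ 2 + v ^ 2).

(** unit normal xi = (x_u x x_v) / |x_u x x_v|  ( = (delta n - v z)/w ) *)
Definition unit_normal (s e : R -> V3) (u v : R) : V3 :=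
  let N := cross (pu3 (ruled s e) u v) (pv3 (ruled s e) u v) in
  vscal (/ vnorm N) N.

Definition h11 (s e : R -> V3) (u v : R) : R :=
  dot (pu3 (pu3 (ruled s e)) u v) (unit_normal s e u v).
Definition h12 (s e : R -> V3) (u v : R) : R :=
  dot (pv3 (pu3 (ruled s e)) u v) (unit_normal s e u v).
Definition h22 (s e : R -> V3) (u v : R) : R :=
  dot (pv3 (pv3 (ruled s e)) u v) (unit_normal s e u v).

Definition q_right (s e : R -> V3) (f g : R -> R) (u v : R) : R :=
  (f u + g u * v) / wfun s e u v.

Definition G11 s e f g u v : R := h11 s e u v / q_right s e f g u v.
Definition G12 s e f g u v : R := h12 s e u v / q_right s e f g u v.
Definition G22 s e f g u v : R := h22 s e u v / q_right s e f g u v.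

(** Gaussian curvature of a (possibly indefinite, nondegenerate) metric
    E du^2 + 2 F du dv + G dv^2, by the Brioschi formula. *)
Definition det3 (a11 a12 a13 a21 a22 a23 a31 a32 a33 : R) : R :=
  a11 * (a22 * a33 - a23 * a32) - a12 * (a21 * a33 - a23 * a31)
  + a13 * (a21 * a32 - a22 * a31).

Definition brioschi (E F G : R -> R -> R) (u v : R) : R :=
  let e := E u v in let f := F u v in let g := G u v in
  let Eu := pu E u v in let Ev := pv E u v in
  let Fu := pu F u v in let Fv := pv F u v in
  let Gu := pu G u v in let Gv := pv G u v in
  let Evv := pv (pv E) u v in let Guu := pu (pu G) u v in
  let Fuv := pv (pu F) u v in
  (det3 (- Evv / 2 + Fuv - Guu / 2) (Eu / 2) (Fu - Ev / 2)
        (Fv - Gu / 2) e f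
        (Gv / 2) f g
   - det3 0 (Ev / 2) (Gu / 2)
          (Ev / 2) e f
          (Gu / 2) f g) / (e * g - f ^ 2) ^ 2.

Definition S_rel (s e : R -> V3) (f g : R -> R) (u v : R) : R :=
  brioschi (G11 s e f g) (G12 s e f g) (G22 s e f g) u v.

(* Main.v *)
Require Import Defs.
From Stdlib Require Import Reals Lra Lia.
From Coquelicot Require Import Coquelicot.
Open Scope R_scope.

Ltac etafix := repeat match goal with |- context [Derive (fun x => ?f x) ?u] => change (Derive (fun x => f x) u) with (Derive f u) end.

Definition dif3 (X : R -> V3) (u : R) : Prop :=
  ex_derive (fun t => vx (X t)) u /\ ex_derive (fun t => vy (X t)) u /\ ex_derive (fun t => vz (X t)) u.

Lemma dot_gen (x1 x2 x3 y1 y2 y3 : R -> R) u :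
  ex_derive x1 u -> ex_derive x2 u -> ex_derive x3 u ->
  ex_derive y1 u -> ex_derive y2 u -> ex_derive y3 u ->
  is_derive (fun t => x1 t * y1 t + x2 t * y2 t + x3 t * y3 t) u
   ((Derive x1 u * y1 u + Derive x2 u * y2 u + Derive x3 u * y3 u) +
    (x1 u * Derive y1 u + x2 u * Derive y2 u + x3 u * Derive y3 u)).
Proof. intros. auto_derive; [repeat split; auto|]. etafix. ring. Qed.

Lemma is_derive_dot (X Y : R -> V3) u : dif3 X u -> dif3 Y u ->
  is_derive (fun t => dot (X t) (Y t)) u (dot (Dv X u) (Y u) + dot (X u) (Dv Y u)).
Proof.
  intros (X1&X2&X3) (Y1&Y2&Y3).
  exact (dot_gen (fun t => vx (X t)) (fun t => vy (X t)) (fun t => vz (X t))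
     (fun t => vx (Y t)) (fun t => vy (Y t)) (fun t => vz (Y t)) u X1 X2 X3 Y1 Y2 Y3).
Qed.

Lemma triple_gen (x1 x2 x3 y1 y2 y3 w1 w2 w3 : R -> R) u :
  ex_derive x1 u -> ex_derive x2 u -> ex_derive x3 u ->
  ex_derive y1 u -> ex_derive y2 u -> ex_derive y3 u ->
  ex_derive w1 u -> ex_derive w2 u -> ex_derive w3 u ->
  is_derive (fun t => triple (mk3 (x1 t) (x2 t) (x3 t)) (mk3 (y1 t) (y2 t) (y3 t)) (mk3 (w1 t) (w2 t) (w3 t))) u
   (triple (mk3 (Derive x1 u) (Derive x2 u) (Derive x3 u)) (mk3 (y1 u) (y2 u) (y3 u)) (mk3 (w1 u) (w2 u) (w3 u))
  + triple (mk3 (x1 u) (x2 u) (x3 u)) (mk3 (Derive y1 u) (Derive y2 u) (Derive y3 u)) (mk3 (w1 u) (w2 u) (w3 u))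
  + triple (mk3 (x1 u) (x2 u) (x3 u)) (mk3 (y1 u) (y2 u) (y3 u)) (mk3 (Derive w1 u) (Derive w2 u) (Derive w3 u))).
Proof. intros. unfold triple, dot, cross, vx, vy, vz, mk3; simpl.
  auto_derive; [repeat split; auto|]. etafix. ring. Qed.

Lemma mk3_eta (X : V3) : X = mk3 (vx X) (vy X) (vz X).
Proof. destruct X as [[x y] z]. reflexivity. Qed.

Lemma is_derive_triple (X Y W : R -> V3) u : dif3 X u -> dif3 Y u -> dif3 W u ->
  is_derive (fun t => triple (X t) (Y t) (W t)) u
   (triple (Dv X u) (Y u) (W u) + triple (X u) (Dv Y u) (W u) + triple (X u) (Y u) (Dv W u)).
Proof.
  intros (X1&X2&X3) (Y1&Y2&Y3) (W1&W2&W3).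
  pose proof (triple_gen (fun t => vx (X t)) (fun t => vy (X t)) (fun t => vz (X t))
     (fun t => vx (Y t)) (fun t => vy (Y t)) (fun t => vz (Y t))
     (fun t => vx (W t)) (fun t => vy (W t)) (fun t => vz (W t)) u X1 X2 X3 Y1 Y2 Y3 W1 W2 W3) as H.
  simpl in H. rewrite <- !mk3_eta in H. exact H.
Qed.
Ltac vunf := unfold triple, dot, cross, vadd, vscal, vx, vy, vz, mk3 in *; simpl in *.

Lemma triple_prod x y w e n z : triple x y w * triple e n z =
  det3 (dot x e) (dot x n) (dot x z) (dot y e) (dot y n) (dot y z) (dot w e) (dot w n) (dot w z).
Proof. unfold det3; vunf. ring. Qed.

Lemma lagrange a b : dot (cross a b) (cross a b) = dot a a * dot b b - (dot a b)^2.
Proof. vunf. ring. Qed.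

Lemma gram x e n : (triple x e n)^2 = det3 (dot x x) (dot x e) (dot x n) (dot e x) (dot e e) (dot e n) (dot n x) (dot n e) (dot n n).
Proof. unfold det3; vunf. ring. Qed.

Lemma dot_comm a b : dot a b = dot b a.
Proof. vunf; ring. Qed.
Lemma dot_cross a b c : dot a (cross b c) = triple a b c.
Proof. reflexivity. Qed.

Section Frame.
Variables e n : V3.
Hypothesis He : dot e e = 1.
Hypothesis Hn : dot n n = 1.
Hypothesis Hen : dot e n = 0.

Lemma frame_triple x y w : triple x y w =
  det3 (dot x e) (dot x n) (dot x (cross e n)) (dot y e) (dot y n) (dot y (cross e n)) (dot w e) (dot w n) (dot w (cross e n)).
Proof.
  rewrite <- triple_prod.
  replace (triple e n (cross e n)) with (dot (cross e n) (cross e n)) by (vunf; ring).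
  rewrite lagrange, He, Hn, Hen. ring.
Qed.

Lemma parseval x : dot x x = (dot x e)^2 + (dot x n)^2 + (dot x (cross e n))^2.
Proof.
  rewrite dot_cross. rewrite gram. unfold det3. rewrite He, Hn, Hen, (dot_comm n e), Hen, (dot_comm e x), (dot_comm n x).
  ring.
Qed.

Lemma polar x y : dot x y = dot x e * dot y e + dot x n * dot y n + dot x (cross e n) * dot y (cross e n).
Proof.
  pose proof (parseval x) as P1. pose proof (parseval y) as P2. pose proof (parseval (vadd x y)) as P3.
  assert (dot (vadd x y) (vadd x y) = dot x x + 2 * dot x y + dot y y) as Q1 by (vunf; ring).
  assert (forall w, dot (vadd x y) w = dot x w + dot y w) as Q2 by (intros; vunf; ring).
  rewrite Q1, !Q2 in P3. nra.
Qed.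
End Frame.

Lemma loc_neq0 (h : R -> R) x : continuous h x -> h x <> 0 -> locally x (fun y => h y <> 0).
Proof. intros Hc Hx. apply (Hc (fun y => y <> 0)). apply open_neq. exact Hx. Qed.

Lemma inI_loc a b u : inI a b u -> locally u (inI a b).
Proof. intros H. apply (open_and _ _ (open_Rbar_gt a) (open_Rbar_lt b)). exact H. Qed.

Lemma deriv_loc_const (f : R -> R) u c l : locally u (fun t => f t = c) -> is_derive f u l -> l = 0.
Proof.
  intros Hl Hd. apply is_derive_unique in Hd. rewrite <- Hd.
  rewrite (Derive_ext_loc f (fun _ => c) u Hl). apply Derive_const.
Qed.

Lemma Dv_ext_loc (X Y : R -> V3) u : locally u (fun t => X t = Y t) -> Dv X u = Dv Y u.
Proof.
  intros H.
  assert (K: forall (p : V3 -> R), Derive (fun t => p (X t)) u = Derive (fun t => p (Y t)) u).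
  { intros p. apply Derive_ext_loc. revert H; apply filter_imp. intros t ->; reflexivity. }
  unfold Dv. rewrite (K vx), (K vy), (K vz). reflexivity.
Qed.

Lemma Dv_lin (X Y : R -> V3) v u : dif3 X u -> dif3 Y u ->
  Dv (fun t => vadd (X t) (vscal v (Y t))) u = vadd (Dv X u) (vscal v (Dv Y u)).
Proof.
  intros (X1&X2&X3) (Y1&Y2&Y3). unfold Dv, vadd, vscal. simpl.
  unfold mk3, vx, vy, vz in *; simpl in *.
  rewrite !Derive_plus, !Derive_scal; auto; apply ex_derive_scal; auto.
Qed.

Lemma Dv_affine (A B : V3) v : Dv (fun t => vadd A (vscal t B)) v = B.
Proof.
  assert (K: forall c d, Derive (fun x => c + x * d) v = d).
  { intros. apply is_derive_unique. auto_derive; auto. ring. }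
  unfold Dv, vadd, vscal, mk3, vx, vy, vz; simpl.
  rewrite !K. destruct B as [[b1 b2] b3]; reflexivity.
Qed.

Lemma Dv_const (A : V3) v : Dv (fun _ => A) v = mk3 0 0 0.
Proof. unfold Dv. rewrite !Derive_const. reflexivity. Qed.

Lemma dot_vscal_r x k y : dot x (vscal k y) = k * dot x y.
Proof. vunf. ring. Qed.
Lemma dot_vadd_l x y w : dot (vadd x y) w = dot x w + dot y w.
Proof. vunf. ring. Qed.
Lemma dot_vscal_l k x w : dot (vscal k x) w = k * dot x w.
Proof. vunf. ring. Qed.
Lemma dot_ge0 x : 0 <= dot x x.
Proof. vunf. nra. Qed.
Lemma vnorm1 x : vnorm x = 1 -> dot x x = 1.
Proof. unfold vnorm. intros H. rewrite <- (sqrt_sqrt (dot x x)) by apply dot_ge0. rewrite H. ring. Qed.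

Section Geo.
Variables (a b : Rbar) (s e : R -> V3).
Hypothesis Hreg : forall u, inI a b u -> dif3 s u /\ dif3 (Dv s) u /\ dif3 (Dv (Dv s)) u /\
   dif3 e u /\ dif3 (Dv e) u /\ dif3 (Dv (Dv e)) u.
Hypothesis Hsp : standard_params a b s e.
Hypothesis Hd : forall u, inI a b u -> delta s e u <> 0.

Local Notation S1 u := (Dv s u).
Local Notation S2 u := (Dv (Dv s) u).
Local Notation E u := (e u).
Local Notation N1 u := (Dv e u).
Local Notation E2 u := (Dv (Dv e) u).
Local Notation Z u := (cross (e u) (Dv e u)).

Lemma F1 u : inI a b u -> dot (E u) (E u) = 1.
Proof. intros H. apply vnorm1. apply (Hsp u H). Qed.
Lemma F2 u : inI a b u -> dot (N1 u) (N1 u) = 1.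
Proof. intros H. apply vnorm1. apply (Hsp u H). Qed.
Lemma F6 u : inI a b u -> dot (S1 u) (N1 u) = 0.
Proof. intros H. apply (Hsp u H). Qed.

Lemma F3 u : inI a b u -> dot (E u) (N1 u) = 0.
Proof.
  intros H. destruct (Hreg u H) as (_&_&_&He&_&_).
  pose proof (is_derive_dot e e u He He) as D.
  apply deriv_loc_const with (c := 1) in D.
  - rewrite (dot_comm (Dv e u)) in D. lra.
  - apply (filter_imp (inI a b)); [intros t Ht; apply F1; exact Ht| apply inI_loc; exact H].
Qed.

Lemma F4 u : inI a b u -> dot (N1 u) (E2 u) = 0.
Proof.
  intros H. destruct (Hreg u H) as (_&_&_&_&He&_).
  pose proof (is_derive_dot (Dv e) (Dv e) u He He) as D.
  apply deriv_loc_const with (c := 1) in D.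
  - rewrite (dot_comm (Dv (Dv e) u)) in D. lra.
  - apply (filter_imp (inI a b)); [intros t Ht; apply F2; exact Ht| apply inI_loc; exact H].
Qed.

Lemma F5 u : inI a b u -> dot (E u) (E2 u) = -1.
Proof.
  intros H. destruct (Hreg u H) as (_&_&_&He&He'&_).
  pose proof (is_derive_dot e (Dv e) u He He') as D.
  apply deriv_loc_const with (c := 0) in D.
  - rewrite (F2 u H) in D. lra.
  - apply (filter_imp (inI a b)); [intros t Ht; apply F3; exact Ht| apply inI_loc; exact H].
Qed.

Lemma F7 u : inI a b u -> dot (S2 u) (N1 u) + dot (S1 u) (E2 u) = 0.
Proof.
  intros H. destruct (Hreg u H) as (_&Hs'&_&_&He'&_).
  pose proof (is_derive_dot (Dv s) (Dv e) u Hs' He') as D.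
  apply deriv_loc_const with (c := 0) in D.
  - exact D.
  - apply (filter_imp (inI a b)); [intros t Ht; apply F6; exact Ht| apply inI_loc; exact H].
Qed.

Lemma dEZ x y : dot x (cross x y) = 0.
Proof. vunf; ring. Qed.
Lemma dNZ x y : dot y (cross x y) = 0.
Proof. vunf; ring. Qed.
Lemma kappa_Z u : kappa e u = dot (E2 u) (Z u).
Proof. unfold kappa. vunf; ring. Qed.
Lemma delta_Z u : delta s e u = dot (S1 u) (Z u).
Proof. reflexivity. Qed.

Lemma ZZ u : inI a b u -> dot (Z u) (Z u) = 1.
Proof. intros H. rewrite lagrange, F1, F2, F3 by exact H. ring. Qed.

Lemma S1E2 u : inI a b u -> dot (S1 u) (E2 u) = kappa e u * delta s e u - dot (S1 u) (E u).
Proof.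
  intros H. rewrite (polar (E u) (N1 u) (F1 u H) (F2 u H) (F3 u H)).
  rewrite (dot_comm (E2 u) (E u)), (dot_comm (E2 u) (N1 u)), (F5 u H), (F4 u H), (F6 u H).
  rewrite <- delta_Z, <- kappa_Z. ring.
Qed.

Lemma is_derive_delta u : inI a b u ->
  is_derive (delta s e) u (triple (S2 u) (E u) (N1 u) + triple (S1 u) (N1 u) (N1 u) + triple (S1 u) (E u) (E2 u)).
Proof.
  intros H. destruct (Hreg u H) as (_&Hs'&_&He&He'&_).
  apply (is_derive_triple (Dv s) e (Dv e) u Hs' He He').
Qed.

Lemma S2Z u : inI a b u -> Derive (delta s e) u = dot (S2 u) (Z u).
Proof.
  intros H. rewrite (is_derive_unique _ _ _ (is_derive_delta u H)).
  assert (T1: triple (S1 u) (N1 u) (N1 u) = 0) by (vunf; ring).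
  assert (T2: triple (S1 u) (E u) (E2 u) = 0).
  { rewrite (frame_triple (E u) (N1 u) (F1 u H) (F2 u H) (F3 u H)).
    rewrite (F6 u H), (F3 u H), (dot_comm (E2 u) (N1 u)), (F4 u H). unfold det3. ring. }
  rewrite T1, T2. change (triple (S2 u) (E u) (N1 u)) with (dot (S2 u) (Z u)). ring.
Qed.

Lemma pu3_ruled t v : inI a b t -> pu3 (ruled s e) t v = vadd (S1 t) (vscal v (N1 t)).
Proof.
  intros H. destruct (Hreg t H) as (Hs&_&_&He&_&_). unfold pu3, ruled. apply Dv_lin; auto.
Qed.

Lemma puu u v : inI a b u -> pu3 (pu3 (ruled s e)) u v = vadd (S2 u) (vscal v (E2 u)).
Proof.
  intros H. destruct (Hreg u H) as (_&Hs&_&_&He&_). unfold pu3 at 1.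
  rewrite (Dv_ext_loc _ (fun t => vadd (S1 t) (vscal v (N1 t)))).
  - apply Dv_lin; auto.
  - apply (filter_imp (inI a b)); [intros t Ht; apply pu3_ruled; exact Ht| apply inI_loc; exact H].
Qed.

Lemma pvu u v : inI a b u -> pv3 (pu3 (ruled s e)) u v = N1 u.
Proof.
  intros H. unfold pv3 at 1.
  rewrite (Dv_ext_loc _ (fun t => vadd (S1 u) (vscal t (N1 u)))).
  - apply Dv_affine.
  - apply filter_forall. intros t. apply pu3_ruled; exact H.
Qed.

Lemma pv_ruled u t : pv3 (ruled s e) u t = E u.
Proof. unfold pv3, ruled. apply Dv_affine. Qed.

Lemma pvv u v : pv3 (pv3 (ruled s e)) u v = mk3 0 0 0.
Proof.
  unfold pv3 at 1. rewrite (Dv_ext_loc _ (fun _ => E u)).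
  - apply Dv_const.
  - apply filter_forall. intros t. apply pv_ruled.
Qed.

Lemma h22_0 u v : h22 s e u v = 0.
Proof. unfold h22. rewrite pvv. vunf. ring. Qed.

Local Notation Nn u v := (cross (vadd (S1 u) (vscal v (N1 u))) (E u)).

Lemma un_eq u v : inI a b u -> unit_normal s e u v = vscal (/ vnorm (Nn u v)) (Nn u v).
Proof. intros H. unfold unit_normal. rewrite pu3_ruled, pv_ruled by exact H. reflexivity. Qed.

Ltac frame H := rewrite (frame_triple _ _ (F1 _ H) (F2 _ H) (F3 _ H)).
Ltac coords H :=
  rewrite ?dot_vadd_l, ?dot_vscal_l;
  rewrite ?(F1 _ H), ?(F2 _ H), ?(F3 _ H), ?(F6 _ H), ?dEZ, ?dNZ, ?(dot_comm (N1 _) (E _)), ?(F3 _ H),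
    ?(dot_comm (E2 _) (N1 _)), ?(F4 _ H), ?(dot_comm (E2 _) (E _)), ?(F5 _ H), ?(ZZ _ H),
    ?(dot_comm (Z _) (E _)), ?(dot_comm (Z _) (N1 _)), ?dEZ, ?dNZ, <- ?kappa_Z, <- ?delta_Z.

Lemma NN u v : inI a b u -> dot (Nn u v) (Nn u v) = delta s e u ^ 2 + v ^ 2.
Proof.
  intros H. rewrite (parseval (E u) (N1 u) (F1 u H) (F2 u H) (F3 u H)).
  rewrite !(dot_comm (Nn u v)), !dot_cross.
  frame H. frame H. frame H. coords H. unfold det3. ring.
Qed.

Lemma w_pos u v : inI a b u -> 0 < wfun s e u v.
Proof.
  intros H. unfold wfun. apply sqrt_lt_R0. pose proof (Hd u H). 
  assert (0 < delta s e u ^ 2) by (apply pow2_gt_0; auto). nra.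
Qed.

Lemma vnorm_Nn u v : inI a b u -> vnorm (Nn u v) = wfun s e u v.
Proof. intros H. unfold vnorm, wfun. rewrite NN by exact H. reflexivity. Qed.

Lemma h12_eq u v : inI a b u -> h12 s e u v = delta s e u / wfun s e u v.
Proof.
  intros H. unfold h12. rewrite pvu, un_eq, dot_vscal_r, vnorm_Nn by exact H.
  rewrite dot_cross. frame H. coords H. unfold det3. field. apply Rgt_not_eq, w_pos, H.
Qed.

Lemma h11_eq u v : inI a b u -> h11 s e u v =
  - (kappa e u * (delta s e u ^ 2 + v ^ 2) + Derive (delta s e) u * v
     - delta s e u * dot (S1 u) (E u)) / wfun s e u v.
Proof.
  intros H. unfold h11. rewrite puu, un_eq, dot_vscal_r, vnorm_Nn by exact H.
  rewrite dot_cross. frame H. coords H.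
  pose proof (F7 u H) as F7'. rewrite (S1E2 u H) in F7'.
  rewrite (S2Z u H). unfold det3.
  replace (dot (S2 u) (N1 u)) with (- (kappa e u * delta s e u - dot (S1 u) (E u))) by lra.
  field. apply Rgt_not_eq, w_pos, H.
Qed.

Lemma lambda_eq u : inI a b u -> lambda s e u = dot (S1 u) (E u) / Rabs (delta s e u).
Proof.
  intros H. unfold lambda, cot_angle, vnorm. rewrite lagrange, (F1 u H), dot_comm.
  rewrite (parseval (E u) (N1 u) (F1 u H) (F2 u H) (F3 u H) (S1 u)), (F6 u H), <- delta_Z.
  f_equal. rewrite <- sqrt_Rsqr_abs. f_equal. rewrite dot_comm. unfold Rsqr. ring.
Qed.
End Geo.

Lemma div_cancel x y w : w <> 0 -> (x / w) / (y / w) = x / y.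
Proof.
  intros Hw. destruct (Req_dec y 0) as [->|Hy].
  - unfold Rdiv. rewrite !Rmult_0_l, !Rinv_0. ring.
  - field. auto.
Qed.

Section Curv.
Variables (a b : Rbar) (s e : R -> V3) (f g : R -> R).
Hypothesis Hreg : forall u, inI a b u -> dif3 s u /\ dif3 (Dv s) u /\ dif3 (Dv (Dv s)) u /\
   dif3 e u /\ dif3 (Dv e) u /\ dif3 (Dv (Dv e)) u.
Hypothesis Hsp : standard_params a b s e.
Hypothesis Hd : forall u, inI a b u -> delta s e u <> 0.
Hypothesis Hf : forall u, inI a b u -> ex_derive f u.
Hypothesis Hg : forall u, inI a b u -> ex_derive g u.

Local Notation D u := (delta s e u).
Local Notation D' u := (Derive (delta s e) u).
Local Notation K u := (kappa e u).
Local Notation A u := (dot (Dv s u) (e u)).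

Lemma G11_eq u v : inI a b u -> G11 s e f g u v =
  - (K u * (D u ^ 2 + v ^ 2) + D' u * v - D u * A u) / (f u + g u * v).
Proof.
  intros H. unfold G11, q_right. rewrite (h11_eq a b s e) by assumption.
  apply div_cancel. apply Rgt_not_eq, (w_pos a b s e Hd), H.
Qed.

Lemma G12_eq u v : inI a b u -> G12 s e f g u v = D u / (f u + g u * v).
Proof.
  intros H. unfold G12, q_right. rewrite (h12_eq a b s e) by assumption.
  apply div_cancel. apply Rgt_not_eq, (w_pos a b s e Hd), H.
Qed.

Lemma G22_eq u v : G22 s e f g u v = 0.
Proof. unfold G22. rewrite (h22_0 s e). unfold Rdiv. ring. Qed.

Lemma puG22 u v : pu (G22 s e f g) u v = 0.
Proof. unfold pu. rewrite (Derive_ext _ (fun _ => 0)) by (intros; apply G22_eq). apply Derive_const. Qed.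
Lemma pvG22 u v : pv (G22 s e f g) u v = 0.
Proof. unfold pv. rewrite (Derive_ext _ (fun _ => 0)) by (intros; apply G22_eq). apply Derive_const. Qed.
Lemma puuG22 u v : pu (pu (G22 s e f g)) u v = 0.
Proof. unfold pu at 1. rewrite (Derive_ext _ (fun _ => 0)) by (intros; apply puG22). apply Derive_const. Qed.

Lemma ex_delta u : inI a b u -> ex_derive (delta s e) u.
Proof. intros H. eexists. apply (is_derive_delta a b s e Hreg u H). Qed.

Lemma pvG12 u v : inI a b u -> f u + g u * v <> 0 ->
  pv (G12 s e f g) u v = - D u * g u / (f u + g u * v) ^ 2.
Proof.
  intros H HP. unfold pv.
  rewrite (Derive_ext _ (fun t => D u / (f u + g u * t))) by (intros; apply G12_eq, H).
  apply is_derive_unique. auto_derive; auto. field. auto.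
Qed.

Lemma puG12 u v : inI a b u -> f u + g u * v <> 0 ->
  pu (G12 s e f g) u v = (D' u * (f u + g u * v) - D u * (Derive f u + Derive g u * v)) / (f u + g u * v) ^ 2.
Proof.
  intros H HP. unfold pu.
  rewrite (Derive_ext_loc _ (fun t => D t / (f t + g t * v))).
  - apply is_derive_unique. auto_derive.
    + repeat split; auto using ex_delta.
    + etafix. field. auto.
  - apply (filter_imp (inI a b)); [intros t Ht; apply G12_eq; exact Ht| apply inI_loc; exact H].
Qed.

Lemma loc_P u v : f u + g u * v <> 0 -> locally v (fun t => f u + g u * t <> 0).
Proof.
  intros HP. apply (loc_neq0 (fun t => f u + g u * t)); auto.
  apply (@ex_derive_continuous R_AbsRing R_NormedModule). auto_derive. auto.
Qed.

Lemma pvpuG12 u v : inI a b u -> f u + g u * v <> 0 ->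
  pv (pu (G12 s e f g)) u v =
  ((D' u * g u - D u * Derive g u) * (f u + g u * v)
    - 2 * (D' u * (f u + g u * v) - D u * (Derive f u + Derive g u * v)) * g u) / (f u + g u * v) ^ 3.
Proof.
  intros H HP. unfold pv at 1.
  rewrite (Derive_ext_loc _ (fun t => (D' u * (f u + g u * t) - D u * (Derive f u + Derive g u * t)) / (f u + g u * t) ^ 2)).
  - apply is_derive_unique. auto_derive; auto. field. auto.
  - apply (filter_imp (fun t => f u + g u * t <> 0)); [intros t Ht; apply puG12; auto| apply loc_P; exact HP].
Qed.

Lemma pvG11 u v : inI a b u -> f u + g u * v <> 0 ->
  pv (G11 s e f g) u v =
  - ((2 * K u * v + D' u) * (f u + g u * v) - (K u * (D u ^ 2 + v ^ 2) + D' u * v - D u * A u) * g u)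
    / (f u + g u * v) ^ 2.
Proof.
  intros H HP. unfold pv.
  rewrite (Derive_ext _ (fun t => - (K u * (D u ^ 2 + t ^ 2) + D' u * t - D u * A u) / (f u + g u * t)))
    by (intros; apply G11_eq, H).
  apply is_derive_unique. auto_derive; auto. field. auto.
Qed.

Lemma pvpvG11 u v : inI a b u -> f u + g u * v <> 0 ->
  pv (pv (G11 s e f g)) u v =
  - (2 * K u * (f u + g u * v) ^ 2
     - 2 * ((2 * K u * v + D' u) * (f u + g u * v) - (K u * (D u ^ 2 + v ^ 2) + D' u * v - D u * A u) * g u) * g u)
    / (f u + g u * v) ^ 3.
Proof.
  intros H HP. unfold pv at 1.
  rewrite (Derive_ext_loc _ (fun t => - ((2 * K u * t + D' u) * (f u + g u * t) - (K u * (D u ^ 2 + t ^ 2) + D' u * t - D u * A u) * g u)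
    / (f u + g u * t) ^ 2)).
  - apply is_derive_unique. auto_derive; auto. field. auto.
  - apply (filter_imp (fun t => f u + g u * t <> 0)); [intros t Ht; apply pvG11; auto| apply loc_P; exact HP].
Qed.

Definition Qpoly (K D D' A F0 G0 F1 G1 v : R) : R :=
  - K * G0 ^ 2 / 2 * v ^ 2 - K * F0 * G0 * v
  + (- K * F0 ^ 2 + (D' * G0 / 2 + D * G1) * F0 - G0 ^ 2 * (K * D ^ 2 - D * A) / 2 - D * G0 * F1).

Lemma S_formula u v : inI a b u -> f u + g u * v <> 0 ->
  S_rel s e f g u v = Qpoly (K u) (D u) (D' u) (A u) (f u) (g u) (Derive f u) (Derive g u) v
     / (D u ^ 2 * (f u + g u * v)).
Proof.
  intros H HP. unfold S_rel, brioschi. cbv zeta.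
  rewrite puuG22, pvG22, puG22, pvpuG12, pvpvG11, pvG11, puG12, pvG12 by auto.
  rewrite G11_eq, G12_eq, G22_eq by auto.
  unfold det3, Qpoly. field. split; auto. 
Qed.
End Curv.

Lemma key (D f g An : R -> R) (sg c t D1 f1 g1 al : R) :
  sg = 1 \/ sg = -1 ->
  is_derive D t D1 -> is_derive f t f1 -> is_derive g t g1 ->
  0 < sg * D t ->
  is_derive An t (al / sqrt (sg * D t)) ->
  (D1 * g t / 2 + D t * g1) * f t + g t ^ 2 * D t * al / 2 - D t * g t * f1 = 0 ->
  (f t - / 2 * sqrt (sg * D t) * (An t + c) * g t) ^ 2 + sg * D t * g t ^ 2 <> 0 ->
  is_derive (fun x => (f x - / 2 * sqrt (sg * D x) * (An x + c) * g x) ^ 2 /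
       ((f x - / 2 * sqrt (sg * D x) * (An x + c) * g x) ^ 2 + sg * D x * g x ^ 2)) t 0.
Proof.
  intros Hsg HD Hf Hg Hpos HA Hc0 HW.
  auto_derive.
  - repeat split; first [eexists; eassumption | assumption | (intro Hx; apply HW; rewrite <- Hx; ring)].
  - etafix.
    rewrite (is_derive_unique _ _ _ HD), (is_derive_unique _ _ _ Hf), (is_derive_unique _ _ _ Hg).
    rewrite (is_derive_unique _ _ _ HA).
    assert (Hr : 0 < sqrt (sg * D t)) by (apply sqrt_lt_R0; exact Hpos).
    assert (Hr2 : sqrt (sg * D t) * sqrt (sg * D t) = sg * D t) by (apply sqrt_sqrt; lra).
    set (r := sqrt (sg * D t)) in *. clearbody r.
    set (F := f t) in *. set (G := g t) in *. set (B := An t + c) in *.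
    set (Dt := D t) in *. clearbody F G B Dt.
    assert (HDt : Dt = sg * (r * r)) by (destruct Hsg; subst; nra).
    subst Dt.
    transitivity (((D1 * G / 2 + sg * (r * r) * g1) * F + G ^ 2 * (sg * (r * r)) * al / 2 - sg * (r * r) * G * f1)
       * (- 2 * sg * (F - / 2 * r * B * G) * G / ((F - / 2 * r * B * G) ^ 2 + sg * (sg * (r * r)) * G ^ 2) ^ 2)).
    + destruct Hsg; subst sg; field; split; try lra; intro Hx; apply HW; rewrite <- Hx; ring.
    + rewrite Hc0. ring.
Qed.

Lemma key2 (D f g An : R -> R) (sg c t D1 g1 al : R) :
  sg = 1 \/ sg = -1 ->
  is_derive D t D1 -> is_derive g t g1 ->
  0 < sg * D t ->
  is_derive An t (al / sqrt (sg * D t)) ->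
  locally t (fun x => f x = / 2 * sqrt (sg * D x) * (An x + c) * g x) ->
  (D1 * g t / 2 + D t * g1) * f t + g t ^ 2 * D t * al / 2 - D t * g t * Derive f t = 0.
Proof.
  intros Hsg HD Hg Hpos HA Hloc.
  assert (Hf1 : Derive f t = Derive (fun x => / 2 * sqrt (sg * D x) * (An x + c) * g x) t)
    by (apply Derive_ext_loc; exact Hloc).
  rewrite Hf1. rewrite (locally_singleton _ _ Hloc).
  erewrite is_derive_unique.
  2:{ auto_derive.
      - repeat split; first [eexists; eassumption | assumption].
      - reflexivity. }
  etafix.
  rewrite (is_derive_unique _ _ _ HD), (is_derive_unique _ _ _ Hg), (is_derive_unique _ _ _ HA).
  assert (Hr : 0 < sqrt (sg * D t)) by (apply sqrt_lt_R0; exact Hpos).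
  assert (Hr2 : sqrt (sg * D t) * sqrt (sg * D t) = sg * D t) by (apply sqrt_sqrt; lra).
  set (r := sqrt (sg * D t)) in *. clearbody r.
  set (G := g t) in *. set (B := An t + c) in *.
  set (Dt := D t) in *. clearbody G B Dt.
  assert (HDt : Dt = sg * (r * r)) by (destruct Hsg; subst; nra).
  subst Dt.
  destruct Hsg; subst sg; field; lra.
Qed.

Lemma ck3 r a b h u : CkI r a b h -> (3 <= r)%nat -> inI a b u ->
  ex_derive h u /\ ex_derive (fun t => Derive h t) u /\ ex_derive (fun t => Derive (fun t' => Derive h t') t) u.
Proof.
  intros H Hr Hu. destruct (H u Hu) as [H1 _].
  split; [|split].
  - exact (H1 1%nat ltac:(lia)).
  - exact (H1 2%nat ltac:(lia)).
  - exact (H1 3%nat ltac:(lia)).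
Qed.

Lemma ck1 k a b h u : CkI (k + 1) a b h -> inI a b u -> ex_derive h u.
Proof. intros H Hu. destruct (H u Hu) as [H1 _]. exact (H1 1%nat ltac:(lia)). Qed.

Lemma reg_of r a b s e : (3 <= r)%nat -> CkI3 r a b s -> CkI3 r a b e ->
  forall u, inI a b u -> dif3 s u /\ dif3 (Dv s) u /\ dif3 (Dv (Dv s)) u /\
   dif3 e u /\ dif3 (Dv e) u /\ dif3 (Dv (Dv e)) u.
Proof.
  intros Hr (s1&s2&s3) (e1&e2&e3) u Hu.
  destruct (ck3 _ _ _ _ u s1 Hr Hu) as (a1&b1&c1).
  destruct (ck3 _ _ _ _ u s2 Hr Hu) as (a2&b2&c2).
  destruct (ck3 _ _ _ _ u s3 Hr Hu) as (a3&b3&c3).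
  destruct (ck3 _ _ _ _ u e1 Hr Hu) as (d1&f1&g1).
  destruct (ck3 _ _ _ _ u e2 Hr Hu) as (d2&f2&g2).
  destruct (ck3 _ _ _ _ u e3 Hr Hu) as (d3&f3&g3).
  unfold dif3. repeat split; assumption.
Qed.

Lemma loc_sign (h : R -> R) t : continuous h t -> h t <> 0 ->
  exists sg, (sg = 1 \/ sg = -1) /\ 0 < sg * h t /\ locally t (fun x => Rabs (h x) = sg * h x).
Proof.
  intros Hc Hn. destruct (Rlt_dec 0 (h t)) as [Hp|Hp].
  - exists 1. split; [left; reflexivity|split; [lra|]].
    apply (filter_imp (fun x => 0 < h x)).
    + intros x Hx. rewrite Rabs_pos_eq; lra.
    + apply (Hc (fun y => 0 < y)). apply open_gt. exact Hp.
  - exists (-1). split; [right; reflexivity|split; [lra|]].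
    apply (filter_imp (fun x => h x < 0)).
    + intros x Hx. rewrite Rabs_left; lra.
    + apply (Hc (fun y => y < 0)). apply open_lt. lra.
Qed.

Lemma inI_conv a b x y z : inI a b x -> inI a b y -> Rmin x y <= z <= Rmax x y -> inI a b z.
Proof.
  intros [Hx1 Hx2] [Hy1 Hy2] [Hz1 Hz2]. split.
  - apply Rbar_lt_le_trans with (Rmin x y). 
    + unfold Rmin. destruct (Rle_dec x y); assumption.
    + simpl. exact Hz1.
  - apply Rbar_le_lt_trans with (Rmax x y).
    + simpl. exact Hz2.
    + unfold Rmax. destruct (Rle_dec x y); assumption.
Qed.

Lemma quad c2 c1 c0 F0 G0 : (F0 <> 0 \/ G0 <> 0) ->
  (forall v, F0 + G0 * v <> 0 -> c2 * v ^ 2 + c1 * v + c0 = 0) -> c2 = 0 /\ c1 = 0 /\ c0 = 0.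
Proof.
  intros Hne H.
  destruct (Req_dec (F0 + G0 * 0) 0) as [h0|h0];
  destruct (Req_dec (F0 + G0 * 1) 0) as [h1|h1];
  destruct (Req_dec (F0 + G0 * 2) 0) as [h2|h2];
  destruct (Req_dec (F0 + G0 * 3) 0) as [h3|h3];
  try (exfalso; destruct Hne; lra);
  repeat match goal with
  | h : F0 + G0 * ?x <> 0 |- _ => let q := fresh "q" in pose proof (H x h) as q; clear h
  end; simpl in *; lra.
Qed.

Ltac byeq1 H := match type of H with ?l = _ => transitivity l; [ring | exact H] end.
Ltac byeq H := first [ byeq1 H | (symmetry; byeq1 H) | lra | nra ].

Theorem proposition2 (a b : Rbar) (r k : nat) (s e : R -> V3) (f g : R -> R) :
  Rbar_lt a b ->
  (3 <= r)%nat -> (1 <= k)%nat ->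
  CkI3 r a b s -> CkI3 r a b e ->
  standard_params a b s e ->
  (forall u, inI a b u -> delta s e u <> 0) ->
  CkI (k + 1) a b f -> CkI (k + 1) a b g ->
  (exists u, inI a b u /\ f u <> 0) ->
  (exists u, inI a b u /\ g u <> 0) ->
  (forall u, inI a b u -> f u <> 0 \/ g u <> 0) ->
  ((forall u v, inI a b u -> f u + g u * v <> 0 -> S_rel s e f g u v = 0)
   <->
   ((forall u, inI a b u -> kappa e u = 0) /\
    exists A : R -> R,
      (forall u, inI a b u ->
         is_derive A u (sqrt (Rabs (delta s e u)) * lambda s e u)) /\
      exists c : R,
        forall u, inI a b u ->
          f u = / 2 * sqrt (Rabs (delta s e u)) * g u * (A u + c))).
Proof.
  intros Hab Hr Hk Hs He Hsp Hd Hf Hg Hfex Hgex Hfg.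
  pose proof (reg_of r a b s e Hr Hs He) as Hreg.
  assert (Hf1 : forall u, inI a b u -> ex_derive f u) by (intros; eapply ck1; eauto).
  assert (Hg1 : forall u, inI a b u -> ex_derive g u) by (intros; eapply ck1; eauto).
  assert (HDc : forall u, inI a b u -> continuous (delta s e) u).
  { intros u Hu. apply (@ex_derive_continuous R_AbsRing R_NormedModule).
    eexists. apply (is_derive_delta a b s e Hreg u Hu). }
  assert (Hlam : forall u, inI a b u -> sqrt (Rabs (delta s e u)) * lambda s e u
                     = dot (Dv s u) (e u) / sqrt (Rabs (delta s e u))).
  { intros u Hu. rewrite (lambda_eq a b s e) by assumption.
    assert (Hm : 0 < Rabs (delta s e u)) by (apply Rabs_pos_lt; auto).
    set (m := Rabs (delta s e u)) in *.
    assert (Hsm : 0 < sqrt m) by (apply sqrt_lt_R0; exact Hm).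
    rewrite <- (sqrt_sqrt m) at 2 by lra. field. lra. }
  split.
  -
    intros HS.
    assert (HQ : forall u, inI a b u ->
      - kappa e u * g u ^ 2 / 2 = 0 /\ - kappa e u * f u * g u = 0 /\
      - kappa e u * f u ^ 2 + (Derive (delta s e) u * g u / 2 + delta s e u * Derive g u) * f u
      - g u ^ 2 * (kappa e u * delta s e u ^ 2 - delta s e u * dot (Dv s u) (e u)) / 2
      - delta s e u * g u * Derive f u = 0).
    { intros u Hu. apply (quad _ _ _ (f u) (g u)); [apply Hfg; exact Hu|].
      intros v Hv. pose proof (HS u v Hu Hv) as H0.
      rewrite (S_formula a b s e f g) in H0 by assumption.
      assert (Hden : delta s e u ^ 2 * (f u + g u * v) <> 0).
      { apply Rmult_integral_contrapositive_currified; auto. apply pow_nonzero; auto. }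
      unfold Rdiv in H0. apply Rmult_integral in H0. destruct H0 as [H0|H0].
      - unfold Qpoly in H0. byeq H0.
      - exfalso. exact (Rinv_neq_0_compat _ Hden H0). }
    assert (HK : forall u, inI a b u -> kappa e u = 0).
    { intros u Hu. destruct (Req_dec (kappa e u) 0) as [|HKn]; [assumption|exfalso].
      assert (Kc : continuous (kappa e) u).
      { destruct (Hreg u Hu) as (_&_&_&He0&He1&He2).
        apply (@ex_derive_continuous R_AbsRing R_NormedModule).
        eexists. exact (is_derive_triple e (Dv e) (Dv (Dv e)) u He0 He1 He2). }
      assert (Hloc : locally u (fun x => g x = 0)).
      { apply (filter_imp (fun x => inI a b x /\ kappa e x <> 0)).
        - intros x [Hx Hkx]. destruct (Req_dec (g x) 0) as [|Hgx]; [assumption|exfalso].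
          apply Hkx. destruct (HQ x Hx) as [Q2 _].
          replace (kappa e x) with ((- kappa e x * g x ^ 2 / 2) * (- 2 / g x ^ 2))
            by (field; auto).
          rewrite Q2. ring.
        - apply filter_and; [apply inI_loc; exact Hu| apply loc_neq0; auto]. }
      assert (Hg0 : g u = 0) by exact (locally_singleton _ _ Hloc).
      assert (Hdg0 : Derive g u = 0).
      { rewrite (Derive_ext_loc g (fun _ => 0) u Hloc). apply Derive_const. }
      destruct (Hfg u Hu) as [Hfu|Hgu]; [|contradiction].
      destruct (HQ u Hu) as (_&_&Q0). rewrite Hg0, Hdg0, (pow_i 2) in Q0 by lia.
      apply HKn.
      replace (kappa e u) with ((- kappa e u * f u ^ 2) * (- 1 / f u ^ 2)) by (field; auto).
      replace (- kappa e u * f u ^ 2) with 0 by lra. ring. }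
    split; [exact HK|].
    destruct Hgex as [u1 [Hu1 Hgu1]].
    set (h := fun x => dot (Dv s x) (e x) / sqrt (Rabs (delta s e x))).
    assert (Hhc : forall x, inI a b x -> continuous h x).
    { intros x Hx. unfold h.
      apply (continuous_mult (fun x => dot (Dv s x) (e x)) (fun x => / sqrt (Rabs (delta s e x)))).
      - destruct (Hreg x Hx) as (_&Hs1&_&He0&_&_).
        apply (@ex_derive_continuous R_AbsRing R_NormedModule).
        eexists. exact (is_derive_dot (Dv s) e x Hs1 He0).
      - apply continuous_Rinv_comp.
        + apply continuous_sqrt_comp. apply continuous_Rabs_comp. apply HDc; exact Hx.
        + apply Rgt_not_eq. apply sqrt_lt_R0. apply Rabs_pos_lt. auto. }
    set (An := fun x => RInt h u1 x).
    assert (HAn : forall x, inI a b x -> is_derive An x (h x)).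
    { intros x Hx. apply (is_derive_RInt h An u1 x).
      - apply (filter_imp (inI a b)); [|apply inI_loc; exact Hx].
        intros y Hy. change (is_RInt h u1 y (RInt h u1 y)).
        apply (@RInt_correct R_CompleteNormedModule).
        apply (@ex_RInt_continuous R_CompleteNormedModule).
        intros z Hz. apply Hhc. apply (inI_conv a b u1 y z); auto.
      - apply Hhc; exact Hx. }
    exists An. split.
    + intros u Hu. rewrite Hlam by exact Hu. apply HAn; exact Hu.
    + set (r1 := sqrt (Rabs (delta s e u1))).
      assert (Hr1 : 0 < r1) by (apply sqrt_lt_R0; apply Rabs_pos_lt; auto).
      exists (2 * f u1 / (r1 * g u1) - An u1).
      set (c := 2 * f u1 / (r1 * g u1) - An u1).
      set (psi := fun x => f x - / 2 * sqrt (Rabs (delta s e x)) * (An x + c) * g x).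
      set (phi := fun x => psi x ^ 2 / (psi x ^ 2 + Rabs (delta s e x) * g x ^ 2)).
      assert (HW : forall x, inI a b x -> psi x ^ 2 + Rabs (delta s e x) * g x ^ 2 <> 0).
      { intros x Hx. destruct (Req_dec (g x) 0) as [Hgx|Hgx].
        - assert (psi x = f x) by (unfold psi; rewrite Hgx; ring).
          destruct (Hfg x Hx) as [Hfx|]; [|contradiction].
          rewrite H, Hgx. apply Rgt_not_eq.
          assert (0 < f x ^ 2) by (apply pow2_gt_0; auto). nra.
        - apply Rgt_not_eq.
          assert (0 < Rabs (delta s e x)) by (apply Rabs_pos_lt; auto).
          assert (0 < g x ^ 2) by (apply pow2_gt_0; auto).
          assert (0 <= psi x ^ 2) by (apply pow2_ge_0). nra. }
      assert (Hphi : forall t, inI a b t -> is_derive phi t 0).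
      { intros t Ht.
        destruct (loc_sign (delta s e) t (HDc t Ht) (Hd t Ht)) as (sg & Hsg & Hpos & Hloc).
        apply (is_derive_ext_loc (fun x => (f x - / 2 * sqrt (sg * delta s e x) * (An x + c) * g x) ^ 2 /
           ((f x - / 2 * sqrt (sg * delta s e x) * (An x + c) * g x) ^ 2 + sg * delta s e x * g x ^ 2))).
        - apply (filter_imp (fun x => Rabs (delta s e x) = sg * delta s e x)); [|exact Hloc].
          intros x Hx. unfold phi, psi. rewrite Hx. reflexivity.
        - pose proof (locally_singleton _ _ Hloc) as Ht0. simpl in Ht0.
          apply (key (delta s e) f g An sg c t (Derive (delta s e) t) (Derive f t) (Derive g t)
                   (dot (Dv s t) (e t)) Hsg).
          + apply Derive_correct. eexists. apply (is_derive_delta a b s e Hreg t Ht).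
          + apply Derive_correct. auto.
          + apply Derive_correct. auto.
          + exact Hpos.
          + rewrite <- Ht0. apply HAn. exact Ht.
          + destruct (HQ t Ht) as (_&_&Q0). rewrite (HK t Ht) in Q0. byeq Q0.
          + rewrite <- Ht0. apply HW. exact Ht. }
      assert (Hpsi1 : psi u1 = 0).
      { unfold psi, c. fold r1. field. split; lra || auto. }
      assert (Hphi1 : phi u1 = 0).
      { unfold phi. rewrite Hpsi1. unfold Rdiv. ring. }
      assert (Hconst : forall t, inI a b t -> phi t = 0).
      { intros t Ht. rewrite <- Hphi1.
        destruct (Rtotal_order t u1) as [Hlt|[Heq|Hgt]].
        - apply eq_is_derive; [|exact Hlt].
          intros z Hz. apply Hphi. apply (inI_conv a b t u1 z Ht Hu1).
          rewrite Rmin_left, Rmax_right by lra. exact Hz.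
        - rewrite Heq. reflexivity.
        - symmetry. apply eq_is_derive; [|exact Hgt].
          intros z Hz. apply Hphi. apply (inI_conv a b u1 t z Hu1 Ht).
          rewrite Rmin_left, Rmax_right by lra. exact Hz. }
      intros u Hu.
      assert (Hp : psi u = 0).
      { pose proof (Hconst u Hu) as H0. unfold phi in H0.
        pose proof (HW u Hu) as H1.
        assert (Hsq : psi u ^ 2 = 0).
        { apply (Rmult_eq_reg_r (/ (psi u ^ 2 + Rabs (delta s e u) * g u ^ 2))).
          - rewrite Rmult_0_l. exact H0.
          - apply Rinv_neq_0_compat. exact H1. }
        nra. }
      unfold psi in Hp. lra.
  - intros [HK [An [HAn [c Hfc]]]] u v Hu HP.
    rewrite (S_formula a b s e f g) by assumption.
    rewrite (HK u Hu).
    destruct (loc_sign (delta s e) u (HDc u Hu) (Hd u Hu)) as (sg & Hsg & Hpos & Hloc).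
    pose proof (locally_singleton _ _ Hloc) as Hu0. simpl in Hu0.
    assert (HA' : is_derive An u (dot (Dv s u) (e u) / sqrt (sg * delta s e u))).
    { rewrite <- Hu0, <- Hlam by exact Hu. apply HAn. exact Hu. }
    assert (Hloc' : locally u (fun x => f x = / 2 * sqrt (sg * delta s e x) * (An x + c) * g x)).
    { apply (filter_imp (fun x => Rabs (delta s e x) = sg * delta s e x /\ inI a b x)).
      - intros x [Hx1 Hx2]. rewrite (Hfc x Hx2), Hx1. ring.
      - apply filter_and; [exact Hloc| apply inI_loc; exact Hu]. }
    pose proof (key2 (delta s e) f g An sg c u (Derive (delta s e) u) (Derive g u) (dot (Dv s u) (e u))
      Hsg (Derive_correct _ _ (ex_delta a b s e Hreg u Hu)) (Derive_correct _ _ (Hg1 u Hu)) Hpos HA' Hloc') as K2.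
    unfold Qpoly. replace (- 0 * g u ^ 2 / 2 * v ^ 2 - 0 * f u * g u * v +
      (- 0 * f u ^ 2 + (Derive (delta s e) u * g u / 2 + delta s e u * Derive g u) * f u -
       g u ^ 2 * (0 * delta s e u ^ 2 - delta s e u * dot (Dv s u) (e u)) / 2 -
       delta s e u * g u * Derive f u)) with 0 by byeq K2.
    unfold Rdiv. ring.
Qed.
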